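(* Let $E$ be an arbitrary directed graph, let $c$ be a cycle without exits in $E$, and let $H=\overline{c^0}$ be the saturated closure of the set $c^0$ of vertices of $c$. The following are equivalent: (i) $|F_E(c^0)|<\infty$; (ii) $H$ satisfies Condition (F) and $B_H=\emptyset$.
   Context: Let $E=(E^0,E^1,r,s)$ be a directed graph. A vertex $v$ is an infinite emitter if $s^{-1}(v)$ is infinite ($\mathrm{Inf}(E)$ is the set of them) and regular if $0<|s^{-1}(v)|<\infty$. Paths $\mu=\mu_1\cdots\mu_n$ ($r(\mu_i)=s(\mu_{i+1})$), $s(\mu)=s(\mu_1)$, $r(\mu)=r(\mu_n)$, $|\mu|=n$; vertices are paths of length $0$; $\mathrm{Path}(E)$ is the set of finite paths. A cycle is a path $c=e_1\cdots e_n$, $n\ge1$, with $r(e_n)=s(e_1)$ and $s(e_i)\neq s(e_j)$ for $i\ne j$; $c^0$ denotes its set of vertices. An exit of $c$ is an edge $e$ with $s(e)=s(e_i)$ for some $i$ and $e\neq e_i$; $c$ is without exits if it has none. $H\subseteq E^0$ is hereditary if $v\in H$ and a path from $v$ to $w$ imply $w\in H$; saturated if every regular $v$ with $r(s^{-1}(v))\subseteq H$ lies in $H$. The saturated closure $\overline{Y}$ of a hereditary set $Y$ is the smallest hereditary saturated set containing $Y$. For $Y\subseteq E^0$, $F_E(Y)$ is the set of paths $\alpha$ of length $\ge1$ with $s(\alpha_1)\notin Y$, $r(\alpha_i)\notin Y$ for $i<|\alpha|$, $r(\alpha_{|\alpha|})\in Y$. For hereditary saturated $H$, $B_H=\{v\in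 E^0\setminus H: v\in\mathrm{Inf}(E),\ 0<|s^{-1}(v)\cap r^{-1}(E^0\setminus H)|<\infty\}$ and $F'_E(H)=\{\alpha\in F_E(H): s(\alpha_{|\alpha|})\notin B_H\}$. $H$ satisfies Condition (F) if $H\cup F'_E(H)\cup\{\alpha\in\mathrm{Path}(E): r(\alpha)\in B_H\}$ is a finite set. *)

(* Defs.v *)
From Stdlib Require Import List.
Import ListNotations.
Set Implicit Arguments.
Unset Strict Implicit.

Record graph := Graph { V : Type; Ed : Type; src : Ed -> V; rng : Ed -> V }.
Arguments src {g} e.
Arguments rng {g} e.

Definition fin (T : Type) (P : T -> Prop) : Prop :=
  exists l : list T, forall x, P x -> In x l.

Section G.
Variable G : graph.

Fixpoint chain (es : list (Ed G)) : Prop :=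
  match es with
  | [] => True
  | e :: t => match t with
              | [] => True
              | f :: _ => rng e = src f /\ chain t
              end
  end.

(* A finite path is a pair (start vertex, edge list); vertices are the
   paths (v, []) of length 0. *)
Definition path := (V G * list (Ed G))%type.

Definition is_path (p : path) : Prop :=
  match snd p with
  | [] => True
  | e :: _ => src e = fst p /\ chain (snd p)
  end.

Fixpoint endv (v : V G) (es : list (Ed G)) : V G :=
  match es with [] => v | e :: t => endv (rng e) t end.

Definition pend (p : path) : V G := endv (fst p) (snd p).

(* source of the last edge (meaningful for nonempty edge lists) *)
Fixpoint lsrc (v : V G) (es : list (Ed G)) : V G :=
  match es with
  | [] => v
  | e :: t => match t with [] => src e | _ => lsrc v t end
  end.

Definition infinite_emitter (v : V G) : Prop := ~ fin (fun e => src e = v).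
Definition regular (v : V G) : Prop :=
  (exists e, src e = v) /\ fin (fun e => src e = v).

Definition hereditary (H : V G -> Prop) : Prop :=
  forall p, is_path p -> H (fst p) -> H (pend p).
Definition saturated (H : V G -> Prop) : Prop :=
  forall v, regular v -> (forall e, src e = v -> H (rng e)) -> H v.

Definition sat_closure (Y : V G -> Prop) (w : V G) : Prop :=
  forall H, hereditary H -> saturated H -> (forall y, Y y -> H y) -> H w.

Definition F_E (Y : V G -> Prop) (p : path) : Prop :=
  is_path p /\ snd p <> [] /\ ~ Y (fst p) /\
  (forall i e, nth_error (snd p) i = Some e -> S i < length (snd p) -> ~ Y (rng e)) /\
  Y (pend p).

Definition B_H (H : V G -> Prop) (v : V G) : Prop :=
  ~ H v /\ infinite_emitter v /\
  (exists e, src e = v /\ ~ H (rng e)) /\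
  fin (fun e => src e = v /\ ~ H (rng e)).

Definition F'_E (H : V G -> Prop) (p : path) : Prop :=
  F_E H p /\ ~ B_H H (lsrc (fst p) (snd p)).

(* Condition (F): H ∪ F'_E(H) ∪ {alpha in Path(E) : r(alpha) in B_H} finite,
   vertices of H viewed as paths of length 0. *)
Definition condF (H : V G -> Prop) : Prop :=
  fin (fun p : path => (snd p = [] /\ H (fst p)) \/ F'_E H p \/
                       (is_path p /\ B_H H (pend p))).

Definition is_cycle (c : list (Ed G)) : Prop :=
  match c with
  | [] => False
  | e :: t => chain c /\ endv (rng e) t = src e /\ NoDup (map src c)
  end.

Definition no_exits (c : list (Ed G)) : Prop :=
  forall e f, In f c -> src e = src f -> e = f.

Definition cverts (c : list (Ed G)) (v : V G) : Prop := In v (map src c).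

End G.

(* Main.v *)
Require Import Defs.
From Stdlib Require Import List.
From Stdlib Require Import Classical FunctionalExtensionality PropExtensionality Lia.
Import ListNotations.

Lemma fin_mono (T : Type) (P Q : T -> Prop) :
  (forall x, P x -> Q x) -> fin Q -> fin P.
Proof. intros H [l Hl]. exists l. auto. Qed.

Lemma fin_or (T : Type) (P Q : T -> Prop) :
  fin P -> fin Q -> fin (fun x => P x \/ Q x).
Proof.
  intros [l1 H1] [l2 H2]. exists (l1 ++ l2). intros x [Hx|Hx]; apply in_or_app; auto.
Qed.

Lemma fin_bind (A B : Type) (P : A -> Prop) (S : A -> B -> Prop) :
  fin P -> (forall a, P a -> fin (S a)) ->
  fin (fun b => exists a, P a /\ S a b).
Proof.
  intros [l Hl] HS.
  assert (forall l, exists m, forall b a, In a l -> P a -> S a b -> In b m) as Hm.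
  { induction l0 as [|a0 l0 IH].
    - exists []. intros b a [].
    - destruct IH as [m Hm]. destruct (classic (P a0)) as [Hp|Hp].
      + destruct (HS a0 Hp) as [ma Ha]. exists (ma ++ m).
        intros b a [<-|Ha0] Hpa Hs; apply in_or_app; eauto.
      + exists m. intros b a [<-|Ha0] Hpa Hs; [contradiction|eauto]. }
  destruct (Hm l) as [m Hm']. exists m. intros b [a [Hp Hs]]. eauto.
Qed.

Fixpoint Fx {G : graph} (Y : V G -> Prop) (v : V G) (es : list (Ed G)) : Prop :=
  match es with
  | [] => False
  | e :: t => src e = v /\ ~ Y v /\ ((Y (rng e) /\ t = []) \/ Fx Y (rng e) t)
  end.

Lemma F_E_Fx {G : graph} (Y : V G -> Prop) :
  forall es v, F_E Y (v, es) <-> Fx Y v es.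
Proof.
  induction es as [|e t IH]; intros v.
  - unfold F_E; simpl; split; [intros (_&H&_); congruence | tauto].
  - destruct t as [|f t'].
    + unfold F_E, pend; simpl. split.
      * intros ((Hs&_)&_&Hv&_&Hy). auto.
      * intros (Hs&Hv&[[Hy _]|[]]). repeat split; auto; try congruence.
        intros i e' Hn Hl. lia.
    + split.
      * intros ((Hs&Hr&Hc)&_&Hv&Hi&Hy). split; [exact Hs|]. split; [exact Hv|].
        right. apply (proj1 (IH (rng e))). unfold F_E, pend in *; simpl in *.
        repeat split; auto; try congruence.
        -- apply (Hi 0 e); simpl; auto; lia.
        -- intros i g Hn Hl. apply (Hi (S i) g); simpl; auto; lia.
      * intros (Hs&Hv&[[_ Hn]|Hf]); [discriminate|]. apply IH in Hf.
        destruct Hf as ((Hsf&Hc)&_&Hr&Hi&Hy).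
        unfold F_E, pend in *; simpl in *.
        repeat split; auto; try congruence.
        intros i g Hn Hl. destruct i as [|j].
        -- simpl in Hn. inversion Hn; subst. exact Hr.
        -- apply (Hi j g); simpl in *; auto; lia.
Qed.

Lemma is_path_cons {G : graph} (v : V G) e t :
  is_path (v, e :: t) -> src e = v /\ is_path (rng e, t).
Proof.
  unfold is_path; simpl. destruct t; simpl; intuition.
Qed.

Inductive Lc {G : graph} (Y : V G -> Prop) : V G -> Prop :=
| Lbase : forall v, Y v -> Lc Y v
| Lsat : forall v, regular v -> (forall e, src e = v -> Lc Y (rng e)) -> Lc Y v.

Lemma Lc_hered {G : graph} (Y : V G -> Prop)
  (hY : forall v e, Y v -> src e = v -> Y (rng e)) : hereditary (Lc Y).
Proof.
  intros [v es]. unfold pend; simpl. revert v.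
  induction es as [|e t IH]; intros v Hp Hv; simpl; auto.
  apply is_path_cons in Hp as [Hs Hp]. apply IH; auto.
  destruct Hv as [v Hy|v Hr Hall].
  - apply Lbase. eauto.
  - apply Hall; auto.
Qed.

Lemma sat_Lc {G : graph} (Y : V G -> Prop)
  (hY : forall v e, Y v -> src e = v -> Y (rng e)) :
  sat_closure Y = Lc Y.
Proof.
  extensionality w. apply propositional_extensionality. split.
  - intros H. apply H.
    + apply Lc_hered; auto.
    + intros v Hr Hall. apply Lsat; auto.
    + intros y Hy. apply Lbase; auto.
  - induction 1 as [v Hy|v Hr Hall IH]; intros H Hh Hs Hb; auto.
    apply Hs; auto. intros e He. apply IH; auto.
Qed.

Lemma chain_rng {G : graph} : forall (t : list (Ed G)) e, chain (e :: t) ->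
  forall f, In f (e :: t) -> In (rng f) (map src t) \/ rng f = endv (rng e) t.
Proof.
  induction t as [|g t IH]; intros e Hc f Hf.
  - simpl in Hf. destruct Hf as [<-|[]]. right; reflexivity.
  - simpl in Hc. destruct Hc as [Hr Hc]. simpl in Hf. destruct Hf as [<-|Hf].
    + left. simpl. left. congruence.
    + destruct (IH g Hc f Hf) as [H1|H1]; [left; simpl; right; exact H1 | right; simpl; exact H1].
Qed.

Lemma cycle_step {G : graph} (c : list (Ed G)) :
  is_cycle c -> no_exits c -> forall v e, cverts c v -> src e = v -> cverts c (rng e).
Proof.
  intros hc hx. destruct c as [|e0 t]; [contradiction|].
  destruct hc as (Hch&Hend&_). unfold cverts; intros v e Hv He.
  apply in_map_iff in Hv as [f [Hfv Hf]].
  assert (e = f) by (apply hx; auto; congruence). subst e.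
  destruct (chain_rng t e0 Hch f Hf) as [H1|H1].
  - simpl. right. exact H1.
  - simpl. left. congruence.
Qed.

Lemma Fx_end {G : graph} (Y : V G -> Prop) : forall es v, Fx Y v es -> Y (endv v es).
Proof.
  induction es as [|e t IH]; intros v H; simpl in *; [contradiction|].
  destruct H as (_&_&[[Hy ->]|Hf]); simpl; auto.
Qed.

Lemma Fx_weaken {G : graph} (Y H : V G -> Prop) (hYH : forall x, Y x -> H x) :
  forall es v, Fx H v es -> Y (endv v es) -> Fx Y v es.
Proof.
  induction es as [|e t IH]; intros v Hf Hy; simpl in *; [contradiction|].
  destruct Hf as (Hs&Hv&[[Hh ->]|Hf]); (split; [auto|split; [auto|]]).
  - left; auto.
  - right. apply IH; auto.
Qed.

Lemma Fx_app {G : graph} (Y H : V G -> Prop) (hYH : forall x, Y x -> H x) :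
  forall es v g, Fx H v es -> Fx Y (endv v es) g -> Fx Y v (es ++ g).
Proof.
  induction es as [|e t IH]; intros v g Hf Hg; simpl in *; [contradiction|].
  destruct Hf as (Hs&Hv&[[Hh ->]|Hf]); (split; [auto|split; [auto|]]).
  - right. simpl in Hg. exact Hg.
  - right. apply IH; auto.
Qed.

Lemma Fx_decomp {G : graph} (Y H : V G -> Prop) (hYH : forall x, Y x -> H x) :
  forall es v, Fx Y v es -> ~ H v ->
  exists b g, es = b ++ g /\ Fx H v b /\ (g = [] \/ Fx Y (endv v b) g).
Proof.
  induction es as [|e t IH]; intros v Hf Hn; simpl in *; [contradiction|].
  destruct Hf as (Hs&Hv&Hr).
  destruct (classic (H (rng e))) as [Hh|Hh].
  - exists [e], t. split; [reflexivity|]. split.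
    + simpl. auto.
    + simpl. destruct Hr as [[_ ->]|Hr]; auto.
  - destruct Hr as [[Hy _]|Hr]; [exfalso; auto|].
    destruct (IH (rng e) Hr Hh) as (b&g&->&Hb&Hg).
    exists (e :: b), g. split; [reflexivity|]. split.
    + simpl. auto.
    + simpl. exact Hg.
Qed.

Lemma Lc_K {G : graph} (Y : V G -> Prop) :
  forall w, Lc Y w -> ~ Y w -> exists g, Fx Y w g.
Proof.
  induction 1 as [v Hy|v Hr Hall IH]; intros Hn; [contradiction|].
  destruct Hr as [[e He] _].
  destruct (classic (Y (rng e))) as [Hy|Hy].
  - exists [e]. simpl. auto.
  - destruct (IH e He Hy) as [g Hg]. exists (e :: g). simpl. auto.
Qed.

Lemma Lc_fin {G : graph} (Y : V G -> Prop) :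
  forall w, Lc Y w -> fin (Fx Y w).
Proof.
  induction 1 as [v Hy|v Hr Hall IH].
  - exists []. intros g Hg. destruct g; simpl in Hg; tauto.
  - destruct Hr as [_ Hfe].
    apply fin_mono with (Q := fun g => exists e, src e = v /\
        (g = [e] \/ exists t, g = e :: t /\ Fx Y (rng e) t)).
    + intros [|e t] Hg; simpl in Hg; [contradiction|].
      destruct Hg as (Hs&_&[[_ ->]|Hf]); exists e; split; auto.
      right; eauto.
    + apply fin_bind; auto. intros e He.
      destruct (IH e He) as [m Hm]. exists ([e] :: map (cons e) m).
      intros g [->|(t&->&Ht)]; simpl; auto.
      right. apply in_map. auto.
Qed.

Definition prefixes {G : graph} (q : path G) : list (path G) :=
  map (fun k => (fst q, firstn k (snd q))) (seq 0 (S (length (snd q)))).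

Theorem lemma2p5 (G : graph) (c : list (Ed G))
  (hc : is_cycle c) (hx : no_exits c) :
  fin (F_E (cverts c)) <->
  (condF (sat_closure (cverts c)) /\
   forall v, ~ B_H (sat_closure (cverts c)) v).
Proof.
  pose proof (cycle_step c hc hx) as hY.
  rewrite (sat_Lc _ hY).
  set (Y := cverts c) in *.
  assert (hYH : forall x, Y x -> Lc Y x) by (intros; apply Lbase; auto).
  split.
  - intros [l Hl].
    assert (HlF : forall v es, Fx Y v es -> In (v, es) l).
    { intros v es H. apply Hl. apply F_E_Fx. exact H. }
    assert (noB : forall v, ~ B_H (Lc Y) v).
    { intros v (Hn&Hinf&_&[lo Hlo]). apply Hinf.
      exists (lo ++ flat_map (fun q => firstn 1 (snd q)) l).
      intros e He. apply in_or_app.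
      destruct (classic (Lc Y (rng e))) as [Hh|Hh]; [right|left; auto].
      apply in_flat_map.
      destruct (classic (Y (rng e))) as [Hy|Hy].
      - exists (v, [e]). split; [apply HlF; simpl; auto|simpl; auto]. split; [auto|split; [intro; apply Hn; auto|left; auto]].
      - destruct (Lc_K Y _ Hh Hy) as [g Hg].
        exists (v, e :: g). split; [apply HlF; simpl|simpl; auto]. split; [auto|split; [intro; apply Hn; auto|right; auto]]. }
    assert (finF : fin (F_E (Lc Y))).
    { exists (flat_map prefixes l). intros [v b] Hf.
      apply F_E_Fx in Hf. apply in_flat_map.
      pose proof (Fx_end _ _ _ Hf) as He.
      destruct (classic (Y (endv v b))) as [Hy|Hy].
      - exists (v, b). split.
        + apply HlF. apply Fx_weaken with (H := Lc Y); auto.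
        + unfold prefixes. apply in_map_iff. exists (length b).
          simpl. rewrite firstn_all. split; auto. apply in_seq with (start := 0) (len := S (length b)). lia.
      - destruct (Lc_K Y _ He Hy) as [g Hg].
        exists (v, b ++ g). split.
        + apply HlF. apply Fx_app with (H := Lc Y); auto.
        + unfold prefixes. apply in_map_iff. exists (length b).
          simpl. rewrite firstn_app, firstn_all. replace (length b - length b) with 0 by lia. simpl.
          rewrite app_nil_r. split; auto. apply (in_seq (S _) 0).
          rewrite length_app. lia. }
    assert (finH : fin (Lc Y)).
    { exists (map src c ++ map fst l). intros v Hv. apply in_or_app.
      destruct (classic (Y v)) as [Hy|Hy]; [left; exact Hy|right].
      destruct (Lc_K Y _ Hv Hy) as [g Hg]. apply in_map_iff.
      exists (v, g). split; auto. }
    split; [|exact noB].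
    unfold condF.
    destruct finH as [lh Hlh]. destruct finF as [lf Hlf].
    exists (map (fun v => (v, @nil (Ed G))) lh ++ lf).
    intros [v es] [(Hs&Hv)|[(Hf&_)|(_&Hb)]]; apply in_or_app.
    + left. simpl in *. subst es. apply (in_map (fun x : V G => (x, @nil (Ed G)))). auto.
    + right. auto.
    + exfalso. eapply noB; eauto.
  - intros [[l Hl] noB].
    assert (finH : fin (Lc Y)).
    { exists (map fst l). intros v Hv. apply in_map_iff. exists (v, []).
      split; auto. }
    assert (finF : fin (F_E (Lc Y))).
    { exists l. intros p Hp. apply Hl. right. left. split; auto. }
    apply fin_mono with (Q := fun p =>
      (exists w, Lc Y w /\ (fst p = w /\ Fx Y w (snd p))) \/
      (exists q, F_E (Lc Y) q /\
        (exists g, p = (fst q, snd q ++ g) /\ (g = [] \/ Fx Y (pend q) g)))).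
    + intros [v es] Hf. apply F_E_Fx in Hf.
      destruct (classic (Lc Y v)) as [Hh|Hh].
      * left. exists v. simpl. auto.
      * right. destruct (Fx_decomp Y (Lc Y) hYH es v Hf Hh) as (b&g&->&Hb&Hg).
        exists (v, b). split; [apply F_E_Fx; exact Hb|].
        exists g. split; auto.
    + apply fin_or.
      * apply fin_bind; auto. intros w Hw.
        destruct (Lc_fin Y w Hw) as [m Hm].
        exists (map (fun g => (w, g)) m). intros [v es] [Hv Hf]. simpl in *. subst v.
        apply in_map. auto.
      * apply fin_bind; auto. intros [v b] Hq.
        assert (Hend : Lc Y (pend (v, b))) by (destruct Hq as (_&_&_&_&Hq); exact Hq).
        destruct (Lc_fin Y _ Hend) as [m Hm].
        exists (map (fun g => (v, b ++ g)) ([] :: m)).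
        intros p (g&->&Hg). apply in_map_iff. exists g. split; auto.
        destruct Hg as [->|Hg]; simpl; auto.
Qed.
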